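(* Let $f\colon\mathbb{R}^n\to\mathbb{R}$ be continuous. Suppose there is $\gamma>0$ such that (i) the set $S_\gamma=\{z\in\mathbb{R}^n : f(z)\le \inf f+\gamma\}$ is compact, and (ii) every $x\in S_\gamma$ with $0\in\partial f(x)$ is a global minimizer of $f$. Let the Moreau Adaptive Descent (MAD) parameters $x^1\in\mathbb{R}^n$, $\alpha$, $t_1,\tau,T\in(0,\infty)$, $\eta_-\in(0,1)$, $\eta_+>1$, $\theta\in(0,1)$, $\delta>0$ and an initial vector $g^0\in\mathbb{R}^n$ satisfy: $\alpha\in(1-\sqrt{\eta_-},\,1+\sqrt{\eta_-})$, and there is a global minimizer $x^\star$ of $f$ such that $t_1\ge\tau$ and $T\ge t_1\ge \|x^\star-x^1\|^2/(2\gamma)$. Let $\{x^k\}$ be generated by MAD (described in the context), with any choice of $\hat x^k\in\operatorname{prox}_{t_kf}(x^k)$ at each step. Then $$\lim_{k\to\infty} f(x^k)=\min_{x\in\mathbb{R}^n} f(x),$$ and some subsequence $\{x^{n_k}\}\subseteq\{x^k\}$ converges to a global minimizer of $f$.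
   Context: For $t>0$, $\operatorname{prox}_{tf}(x)=\operatorname{argmin}_{z\in\mathbb{R}^n}\big(f(z)+\frac{1}{2t}\|z-x\|^2\big)$ (a set) and the Moreau envelope is $u(x,t)=\inf_{z\in\mathbb{R}^n}\big(f(z)+\frac{1}{2t}\|z-x\|^2\big)$. The subdifferential $\partial f(\bar x)$ is the set of all $v\in\mathbb{R}^n$ such that $f(x)\ge f(\bar x)+\langle v,x-\bar x\rangle+o(\|x-\bar x\|)$ as $x\to\bar x$. MAD: for $k=1,2,\dots$: choose $\hat x^k\in\operatorname{prox}_{t_kf}(x^k)$; set $g^k=(x^k-\hat x^k)/t_k$; set $x^{k+1}=x^k-\alpha t_k g^k$; set $t_{k+1}=\min(\eta_+t_k,T)$ if $\|g^k\|\le\theta\|g^{k-1}\|+\delta$, and $t_{k+1}=\max(\eta_-t_k,\tau)$ otherwise. *)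

(* Defs.v *)
From HB Require Import structures.
From mathcomp Require Import all_boot all_order all_algebra.
From mathcomp Require Import all_classical all_reals all_analysis.
Set Implicit Arguments. Unset Strict Implicit. Unset Printing Implicit Defensive.
Import Order.TTheory GRing.Theory Num.Theory.
Import numFieldNormedType.Exports.
Local Open Scope classical_set_scope.
Local Open Scope ring_scope.

Section Defs.
Variables (R : realType) (n : nat).
Notation V := 'rV[R]_n.

Definition dotv (u v : V) : R := \sum_(i < n) u 0 i * v 0 i.
Definition enorm (u : V) : R := Num.sqrt (dotv u u).

Definition is_global_min (f : V -> R) (x : V) : Prop := forall z, f x <= f z.

Definition inff (f : V -> R) : R := inf (range f).

Definition S_gamma (f : V -> R) (gamma : R) : set V :=
  [set z | f z <= inff f + gamma].

(* (Frechet) subdifferential: v in ∂f(xb) iff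
   f x >= f xb + <v, x - xb> + o(|x - xb|) as x -> xb *)
Definition subdiff (f : V -> R) (xb : V) : set V :=
  [set v | forall eps : R, 0 < eps -> exists2 d : R, 0 < d &
     forall x : V, enorm (x - xb) < d ->
       f xb + dotv v (x - xb) - eps * enorm (x - xb) <= f x].

Definition prox (f : V -> R) (t : R) (x : V) : set V :=
  [set z | forall w : V,
     f z + (enorm (z - x)) ^+ 2 / (2 * t) <= f w + (enorm (w - x)) ^+ 2 / (2 * t)].

Definition MAD_run (f : V -> R) (x1 : V) (alpha t1 tau T eta_m eta_p theta delta : R)
    (x xhat g : nat -> V) (t : nat -> R) : Prop :=
  [/\ x 1%N = x1, t 1%N = t1 &
    forall k : nat, (1 <= k)%N ->
      [/\ xhat k \in prox f (t k) (x k),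
          g k = (t k)^-1 *: (x k - xhat k),
          x k.+1 = x k - (alpha * t k) *: g k &
          t k.+1 = if enorm (g k) <= theta * enorm (g k.-1) + delta
                   then Order.min (eta_p * t k) T
                   else Order.max (eta_m * t k) tau]].
End Defs.

(* Main.v *)
Require Import Defs.
From HB Require Import structures.
From mathcomp Require Import all_boot all_order all_algebra.
From mathcomp Require Import all_classical all_reals all_analysis.
From mathcomp Require Import ring lra.
Import Order.TTheory GRing.Theory Num.Theory.
Import numFieldNormedType.Exports.
Local Open Scope classical_set_scope.
Local Open Scope ring_scope.
Set Implicit Arguments. Unset Strict Implicit.

Lemma dot_ge0 (R : realType) n (u : 'rV[R]_n) : 0 <= dotv u u.
Proof. by apply: sumr_ge0 => i _; rewrite -expr2 sqr_ge0. Qed.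

Lemma enorm_sq (R : realType) n (u : 'rV[R]_n) : enorm u ^+ 2 = dotv u u.
Proof. by rewrite /enorm sqr_sqrtr // dot_ge0. Qed.

Lemma enorm_ge0 (R : realType) n (u : 'rV[R]_n) : 0 <= enorm u.
Proof. exact: sqrtr_ge0. Qed.

Lemma dotZ (R : realType) n (c : R) (u : 'rV[R]_n) :
  dotv (c *: u) (c *: u) = c ^+ 2 * dotv u u.
Proof.
rewrite /dotv mulr_sumr; apply: eq_bigr => i _; rewrite !mxE; ring.
Qed.

Lemma dotD (R : realType) n (u v : 'rV[R]_n) :
  dotv (u + v) (u + v) <= 2 * dotv u u + 2 * dotv v v.
Proof.
rewrite /dotv !mulr_sumr -big_split /=; apply: ler_sum => i _; rewrite !mxE.
set a := u 0 i; set b := v 0 i; have := sqr_ge0 (a - b); nra.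
Qed.

Lemma dot0 (R : realType) n (u : 'rV[R]_n) : dotv 0 u = 0.
Proof. by rewrite /dotv big1 // => i _; rewrite mxE mul0r. Qed.

Lemma coord_le (R : realType) n (u : 'rV[R]_n) i : u 0 i ^+ 2 <= dotv u u.
Proof.
rewrite /dotv (bigD1 i) //= -expr2 lerDl; apply: sumr_ge0 => j _.
by rewrite -expr2 sqr_ge0.
Qed.

Lemma norm_le_enorm (R : realType) n (u : 'rV[R]_n) : `|u| <= enorm u.
Proof.
have -> : `|u| = mx_norm u by []. rewrite mx_normrE; apply/bigmax_leP; split.
  exact: enorm_ge0.
move=> [i j] _ /=; rewrite (ord1 i) -sqrtr_sqr /enorm ler_sqrt ?dot_ge0 //.
exact: coord_le.
Qed.

Lemma dot_le_norm (R : realType) n (u : 'rV[R]_n) :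
  dotv u u <= n%:R * `|u| ^+ 2.
Proof.
have -> : n%:R * `|u| ^+ 2 = \sum_(i < n) `|u| ^+ 2.
  by rewrite sumr_const card_ord mulr_natl.
rewrite /dotv; apply: ler_sum => i _.
rewrite -expr2 -real_normK ?num_real //; rewrite lerXn2r ?nnegrE //.
have -> : `|u| = mx_norm u by []. rewrite mx_normrE.
by apply: (le_bigmax _ _ (ord0, i)).
Qed.

Lemma dot_small (R : realType) n (v : 'rV[R]_n) e : 0 < e ->
  `|v| < Num.sqrt (e / n.+1%:R) -> dotv v v < e.
Proof.
move=> e0 hv.
have hn : (0 : R) < n.+1%:R by rewrite ltr0n.
have h1 : `|v| ^+ 2 < e / n.+1%:R.
  rewrite -(@sqr_sqrtr _ (e / n.+1%:R)); last by rewrite divr_ge0 // ltW.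
  by rewrite ltrXn2r // ?nnegrE // sqrtr_ge0.
apply: le_lt_trans (dot_le_norm v) _.
have h2 : n%:R * `|v| ^+ 2 <= n%:R * (e / n.+1%:R).
  by rewrite ler_wpM2l // ltW.
apply: le_lt_trans h2 _.
rewrite mulrA ltr_pdivrMr // mulrC ltr_pM2l // ltr_nat //.
Qed.

Lemma norm_small (R : realType) n (v : 'rV[R]_n) e : 0 < e ->
  dotv v v < e ^+ 2 -> `|v| < e.
Proof.
move=> e0 hv.
have h := norm_le_enorm v.
have h2 : `|v| ^+ 2 <= dotv v v.
  by rewrite -enorm_sq lerXn2r // ?nnegrE // enorm_ge0.
have := normr_ge0 v; nra.
Qed.

Lemma subseq_compact (R : realType) n (K : set 'rV[R]_n) (y : nat -> 'rV[R]_n)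
  (P : nat -> Prop) :
  compact K -> (forall k, P k -> K (y k)) ->
  (forall N, exists k, (N <= k)%N /\ P k) ->
  exists (phi : nat -> nat) (c : 'rV[R]_n),
    [/\ forall k, (phi k < phi k.+1)%N, forall k, P (phi k), K c &
        (y \o phi) @ \oo --> c].
Proof.
move=> cK PK Pinf.
pose B N := [set v | exists k, [/\ (N <= k)%N, P k & v = y k]].
pose F := filter_from setT B.
have FF : Filter F.
  apply: filter_fromT_filter; first by exists 0%N.
  move=> i j; exists (maxn i j) => v [k [hk Pk ->]]; split.
    by exists k; split => //; apply: leq_trans hk; apply: leq_maxl.
  by exists k; split => //; apply: leq_trans hk; apply: leq_maxr.
have PF : ProperFilter F.
  apply: filter_from_proper => N _.
  by have [k [hk Pk]] := Pinf N; exists (y k); exists k.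
have FK : F K by exists 0%N => // v [k [_ Pk ->]]; exact: PK.
have [c [Kc clc]] := cK F PF FK.
have H : forall j N, exists k, [/\ (N <= k)%N, P k & `|c - y k| < (j.+1%:R)^-1].
  move=> j N.
  have hb := @nbhsx_ballx _ _ c (j.+1%:R^-1) (ltac:(by rewrite invr_gt0 ltr0n)).
  have [v [[k [hk Pk ->]] hv]] := clc (B N) _ (ltac:(by exists N)) hb.
  by exists k; split => //; move: hv; rewrite -ball_normE.
have [sel hsel] := choice (fun jN : nat * nat => H jN.1 jN.2).
pose phi := fix phi k := if k is k'.+1 then sel (k, (phi k').+1) else sel (0%N, 0%N).
exists phi, c; split => //.
- move=> k /=; by have [+ _ _] := hsel (k.+1, (phi k).+1).
- by case=> [|k] /=; [have [_ + _] := hsel (0%N, 0%N) | have [_ + _] := hsel (k.+1, (phi k).+1)].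
apply/cvgrPdist_lt => e e0.
have := near_infty_natSinv_lt (PosNum e0); case => N _ hN.
exists N => // k /= hk.
have hk' : `|c - y (phi k)| < k.+1%:R^-1.
  by case: k hk => [|k] _ /=; [have [_ _ +] := hsel (0%N, 0%N) | have [_ _ +] := hsel (k.+1, (phi k).+1)].
apply: lt_trans hk' _; apply: le_lt_trans (hN N (leqnn N)).
by rewrite lef_pV2 ?posrE ?ltr0n // ler_nat.
Qed.

Unset Implicit Arguments. Set Strict Implicit.

Theorem theorem1 (R : realType) (n : nat) (f : 'rV[R]_n -> R) (gamma : R)
  (x1 : 'rV[R]_n) (alpha t1 tau T eta_m eta_p theta delta : R) (g0 : 'rV[R]_n)
  (x xhat g : nat -> 'rV[R]_n) (t : nat -> R) :
  continuous f ->
  0 < gamma ->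
  compact (S_gamma f gamma) ->
  (forall z, S_gamma f gamma z -> subdiff f z 0 -> is_global_min f z) ->
  0 < alpha -> 0 < t1 -> 0 < tau -> 0 < T ->
  0 < eta_m < 1 -> 1 < eta_p -> 0 < theta < 1 -> 0 < delta ->
  1 - Num.sqrt eta_m < alpha < 1 + Num.sqrt eta_m ->
  (exists xs : 'rV[R]_n, [/\ is_global_min f xs, tau <= t1, t1 <= T &
       (enorm (xs - x1)) ^+ 2 / (2 * gamma) <= t1]) ->
  g 0%N = g0 ->
  MAD_run f x1 alpha t1 tau T eta_m eta_p theta delta x xhat g t ->
  (fun k => f (x k)) @ \oo --> inff f /\
  exists (phi : nat -> nat) (xb : 'rV[R]_n),
    [/\ (forall k, (phi k < phi k.+1)%N), is_global_min f xb &
        (x \o phi) @ \oo --> xb].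
Proof.
move=> fc g0pos cS hS a0 t10 tau0 T0 /andP[em0 em1] ep1 _ _ /andP[al1 al2]
  [xs [xsmin taut1 t1T hxs]] _ [hx1 ht1 hstep].
have hinf : inff f = f xs.
  apply/le_anti/andP; split.
    by apply: ge_inf; [exists (f xs) => _ [z _ <-]; exact: xsmin | exists xs].
  by apply: lb_le_inf; [exists (f xs), xs | move=> _ [z _ <-]; exact: xsmin].
have htb : forall k, (1 <= k)%N -> tau <= t k <= T.
  elim=> [//|k IH] _.
  have [k0|kpos] := posnP k; first by rewrite k0 ht1 taut1 t1T.
  have [/andP[h1 h2]] := IH kpos.
  have [_ _ _ ->] := hstep k kpos.
  have tk0 : 0 < t k by apply: lt_le_trans h1.
  have tauT : tau <= T by apply: le_trans h2.
  case: ifP => _; apply/andP; split.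
  - by rewrite le_min tauT andbT; nra.
  - by rewrite ge_min lexx orbT.
  - by rewrite le_max lexx orbT.
  - by rewrite ge_max tauT andbT; nra.
pose D k := dotv (xhat k - x k) (xhat k - x k).
pose U k := f (xhat k) + D k / (2 * t k).
have D0 : forall k, 0 <= D k by move=> k; exact: dot_ge0.
have hprox : forall k, (1 <= k)%N -> forall w,
    U k <= f w + dotv (w - x k) (w - x k) / (2 * t k).
  move=> k hk w; have [+ _ _ _] := hstep k hk.
  by rewrite in_setE => /(_ w); rewrite !enorm_sq.
have hteta : forall k, (1 <= k)%N -> eta_m * t k <= t k.+1.
  move=> k hk; have /andP[h1 h2] := htb k hk.
  have tk0 : 0 < t k by apply: lt_le_trans h1.
  have [_ _ _ ->] := hstep k hk.
  case: ifP => _.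
    by rewrite le_min; apply/andP; split; nra.
  by rewrite le_max lexx.
have hdiff : forall k, (1 <= k)%N -> xhat k - x k.+1 = (1 - alpha) *: (xhat k - x k).
  move=> k hk; have /andP[h1 h2] := htb k hk.
  have tk0 : t k != 0 by rewrite gt_eqF // (lt_le_trans tau0 h1).
  have [_ -> -> _] := hstep k hk.
  apply/rowP => i; rewrite !mxE; field.
  done.
have hrho : (1 - alpha) ^+ 2 < eta_m.
  have hs : 0 <= Num.sqrt eta_m by exact: sqrtr_ge0.
  have hs2 : Num.sqrt eta_m ^+ 2 = eta_m by rewrite sqr_sqrtr // ltW.
  rewrite -hs2; nra.
pose c := (1 - (1 - alpha) ^+ 2 / eta_m) / (2 * T).
have c0 : 0 < c.
  apply: divr_gt0; last by nra.
  by rewrite subr_gt0 ltr_pdivrMr // mul1r.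
have hdesc : forall k, (1 <= k)%N -> U k.+1 + c * D k <= U k.
  move=> k hk; have /andP[h1 h2] := htb k hk.
  have tk0 : 0 < t k by apply: lt_le_trans h1.
  have tk1 := hteta k hk.
  have hp := hprox k.+1 (ltn0Sn k) (xhat k).
  rewrite hdiff // dotZ in hp.
  set a := (1 - alpha) ^+ 2 in hp hrho *.
  have a0' : 0 <= a by rewrite sqr_ge0.
  have k1 : a / (2 * t k.+1) <= a / (2 * (eta_m * t k)).
    by rewrite ler_wpM2l // lef_pV2 ?posrE; nra.
  have k2 : c <= (1 - a / eta_m) / (2 * t k).
    rewrite /c ler_wpM2l ?lef_pV2 ?posrE; try nra.
    by rewrite subr_ge0 ler_pdivrMr // mul1r ltW.
  have k3 : a / (2 * (eta_m * t k)) + (1 - a / eta_m) / (2 * t k) = (2 * t k)^-1.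
    field; apply/andP; split; apply/negP => /eqP; lra.
  have k4 : a / (2 * t k.+1) + c <= (2 * t k)^-1 by rewrite -k3; apply: lerD.
  have k5 := ler_wpM2l (D0 k) k4.
  rewrite /U; move: hp k5; rewrite /U.
  set A := (2 * t k.+1)^-1; set B := (2 * t k)^-1.
  rewrite -/(D k) => hp k5.
  lra.
have tpos : forall k, (1 <= k)%N -> 0 < t k.
  by move=> k hk; have /andP[h1 _] := htb k hk; apply: lt_le_trans h1.
have hUlb : forall k, (1 <= k)%N -> f xs <= U k.
  move=> k hk; rewrite /U -[f xs]addr0; apply: lerD; first exact: xsmin.
  by rewrite divr_ge0 // mulr_ge0 // ltW // tpos.
have hU1 : U 1%N <= f xs + gamma.
  apply: le_trans (hprox 1%N isT xs) _; rewrite hx1 ht1 -enorm_sq lerD2l.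
  move: hxs; rewrite !ler_pdivrMr ?mulr_gt0 //; nra.
have hUle : forall k, (1 <= k)%N -> U k <= U 1%N.
  elim=> [//|k IH] _.
  have [k0|kpos] := posnP k; first by rewrite k0.
  apply: le_trans (IH kpos); apply: le_trans (hdesc k kpos).
  by rewrite lerDl mulr_ge0 // ltW.
have hSk : forall k, (1 <= k)%N -> S_gamma f gamma (xhat k).
  move=> k hk; rewrite /S_gamma /= hinf.
  apply: le_trans (hU1); apply: le_trans (hUle k hk).
  by rewrite /U lerDl divr_ge0 // mulr_ge0 // ltW // tpos.
have hD : forall e, 0 < e -> exists N, forall k, (N <= k)%N -> D k < e.
  move=> e e0.
  pose V k := U k.+1.
  have Vni : nonincreasing_seq V.
    apply/nonincreasing_seqP => k; rewrite /V.
    apply: le_trans (hdesc k.+1 isT); by rewrite lerDl mulr_ge0 // ltW.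
  have Vlb : has_lbound (range V) by exists (f xs) => _ [k _ <-]; exact: hUlb.
  have [l hl] := (cvg_ex _).1 (nonincreasing_is_cvgn Vni Vlb).
  have hl' : (fun k => V k.+1) @ \oo --> l by rewrite cvg_shiftS.
  have ec0 : 0 < e * c / 2 by rewrite divr_gt0 // mulr_gt0.
  have [N1 _ hN1] := (cvgrPdist_lt _ _).1 hl _ ec0.
  have [N2 _ hN2] := (cvgrPdist_lt _ _).1 hl' _ ec0.
  exists (maxn N1 N2).+1 => k hk.
  case: k hk => [//|k]; rewrite ltnS geq_max => /andP[hk1 hk2].
  have kpos : (0 < k.+1)%N by [].
  have := hN1 _ hk1; have := hN2 _ hk2; rewrite /= /V.
  have := hdesc k.+1 kpos.
  move=> hd; rewrite !ltr_norml => /andP[a1 a2] /andP[b1 b2].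
  have : c * D k.+1 < c * e by lra.
  by rewrite ltr_pM2l.
have hxx : forall e, 0 < e -> exists N, forall k, (N <= k)%N -> `|xhat k - x k| < e.
  move=> e e0; have [N hN] := hD (e ^+ 2) (exprn_gt0 2 e0).
  by exists N => k hk; apply: norm_small => //; exact: hN.
have hclaim : forall P : nat -> Prop, (forall N, exists k, (N <= k)%N /\ P k) ->
    exists (phi : nat -> nat) (cb : 'rV[R]_n),
    [/\ forall k, (phi k < phi k.+1)%N, forall k, P (phi k), is_global_min f cb &
        (x \o phi) @ \oo --> cb].
  move=> P Pinf.
  have Pinf' : forall N, exists k, (N <= k)%N /\ ((1 <= k)%N /\ P k).
    move=> N; have [k [hk Pk]] := Pinf (maxn N 1).
    by exists k; rewrite geq_max in hk; case/andP: hk => hk1 hk2; split.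
  have [phi [cb [phinc Pphi Sc conv]]] :=
    subseq_compact (P := fun k => (1 <= k)%N /\ P k) cS (fun k hk => hSk k (proj1 hk)) Pinf'.
  have phige : forall k, (k <= phi k)%N.
    by elim=> [//|k IH]; apply: leq_ltn_trans IH (phinc k).
  have convx : (x \o phi) @ \oo --> cb.
    apply/cvgrPdist_lt => e e0.
    have e20 : 0 < e / 2 by rewrite divr_gt0.
    have [N1 _ h1] := (cvgrPdist_lt _ _).1 conv _ e20.
    have [N2 h2] := hxx _ e20.
    exists (maxn N1 N2) => // k /=; rewrite geq_max => /andP[hk1 hk2].
    have := h1 _ hk1; have := h2 _ (leq_trans hk2 (phige k)); rewrite /= => a1 a2.
    have -> : cb - x (phi k) = (cb - xhat (phi k)) + (xhat (phi k) - x (phi k)).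
      by rewrite addrA subrK.
    apply: le_lt_trans (ler_normD _ _) _; lra.
  have hEc : forall e, 0 < e -> exists N, forall k, (N <= k)%N ->
      dotv (cb - x (phi k)) (cb - x (phi k)) < e.
    move=> e e0.
    have s0 : 0 < Num.sqrt (e / n.+1%:R) by rewrite sqrtr_gt0 divr_gt0 // ltr0n.
    have [N _ hN] := (cvgrPdist_lt _ _).1 convx _ s0.
    by exists N => k hk; apply: dot_small => //; exact: hN.
  have fconv : (f \o (xhat \o phi)) @ \oo --> f cb.
    by apply: continuous_cvg => //; exact: fc.
  have hlim : forall w, f cb <= f w + dotv (w - cb) (w - cb) / tau.
    move=> w; apply/ler_addgt0Pr => e e0.
    have e20 : 0 < e / 2 by rewrite divr_gt0.
    have [N1 _ h1] := (cvgrPdist_lt _ _).1 fconv _ e20.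
    have [N2 h2] := hEc (tau * (e / 2)) (mulr_gt0 tau0 e20).
    pose j := phi (maxn N1 N2).
    have hj : (1 <= j)%N by have [] := Pphi (maxn N1 N2).
    have a1 := h1 _ (leq_maxl N1 N2); have a2 := h2 _ (leq_maxr N1 N2).
    rewrite /= -/j in a1 a2.
    have hp := hprox j hj w.
    have tj := htb j hj; case/andP: tj => tj1 tj2.
    have tj0 : 0 < t j by apply: lt_le_trans tj1.
    have q0 : f (xhat j) <= U j.
      by rewrite /U lerDl divr_ge0 // mulr_ge0 // ltW.
    set E1 := dotv (w - cb) (w - cb) in a2 *.
    set E2 := dotv (cb - x j) (cb - x j) in a2.
    have E1p : 0 <= E1 by exact: dot_ge0.
    have E2p : 0 <= E2 by exact: dot_ge0.
    set E := dotv (w - x j) (w - x j) in hp.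
    have Ep : 0 <= E by exact: dot_ge0.
    have r1 : E / (2 * t j) <= E / (2 * tau).
      by rewrite ler_wpM2l // lef_pV2 ?posrE; nra.
    have r2 : E <= 2 * E1 + 2 * E2.
      rewrite /E; have -> : w - x j = (w - cb) + (cb - x j) by rewrite addrA subrK.
      exact: dotD.
    have r2' : E / (2 * tau) <= (2 * E1 + 2 * E2) / (2 * tau).
      by rewrite ler_wpM2r // invr_ge0 mulr_ge0 // ltW.
    have r3 : (2 * E1 + 2 * E2) / (2 * tau) = E1 / tau + E2 / tau.
      by field; apply/negP => /eqP; lra.
    have r4 : E2 / tau < e / 2 by rewrite ltr_pdivrMr // mulrC.
    move: a1; rewrite ltr_norml => /andP[a1 a1'].
    lra.
  have hsub : subdiff f cb 0.
    move=> e e0; exists (e * tau); first exact: mulr_gt0.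
    move=> w hw; rewrite dot0 addr0.
    have := hlim w; rewrite -enorm_sq.
    set r := enorm (w - cb) in hw *.
    have r0 : 0 <= r by exact: enorm_ge0.
    have h1 : r / tau < e by rewrite ltr_pdivrMr.
    have h2 : r ^+ 2 / tau <= e * r.
      by rewrite expr2 -mulrA mulrC ler_wpM2r // ltW.
    lra.
  exists phi, cb; split => //; first by move=> k; have [] := Pphi k.
  exact: hS.
split.
  rewrite hinf; apply/cvgrPdist_lt => e e0.
  apply: contrapT => hno.
  have Pinf : forall N, exists k, (N <= k)%N /\ ~ (`|f xs - f (x k)| < e).
    move=> N; apply: contrapT => hN; apply: hno; exists N => // k /= hk.
    by apply: contrapT => hk'; apply: hN; exists k.
  have [phi [cb [_ Pphi cmin convx]]] := hclaim _ Pinf.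
  have fc' : f cb = f xs by apply/le_anti; rewrite xsmin cmin.
  have fconv : (f \o (x \o phi)) @ \oo --> f cb.
    by apply: continuous_cvg => //; exact: fc.
  have [N _ hN] := (cvgrPdist_lt _ _).1 fconv _ e0.
  by apply: (Pphi N); rewrite -fc'; exact: (hN N (leqnn N)).
have [phi [cb [h1 _ h3 h4]]] := hclaim (fun _ => True) (fun N => ex_intro _ N (conj (leqnn N) I)).
by exists phi, cb; split.
Qed.
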